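(* For every positive integer $t$ and every real $0<p\le1$, $$\sum_{i=1}^{t} i^p\le \frac{p}{p+1}\cdot\frac{t^p(t+1)^p}{(t+1)^p-t^p}.$$ *)

(* Defs.v *)
From Stdlib Require Import Reals.
Open Scope R_scope.

(* sum_{i=1}^{t} i^p, with real exponent via Rpower (bases are >= 1 > 0). *)
Definition powsum (p : R) (t : nat) : R :=
  sum_f_R0 (fun k => Rpower (INR (S k)) p) (Nat.pred t).

(* Main.v *)
Require Import Defs.
From Stdlib Require Import Reals.
Open Scope R_scope.
From Stdlib Require Import Lra Lia.
From Coquelicot Require Import Coquelicot.

Lemma incr_of_deriv (f df : R->R) a b : a <= b ->
  (forall x, a <= x <= b -> is_derive f x (df x)) ->
  (forall x, a <= x <= b -> 0 <= df x) -> f a <= f b.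
Proof.
  intros hab hd hpos.
  destruct (MVT_gen f a b df) as [c [hc e]].
  - intros x hx. apply hd. rewrite Rmin_left in hx by lra. rewrite Rmax_right in hx by lra. lra.
  - intros x hx. rewrite Rmin_left in hx by lra. rewrite Rmax_right in hx by lra.
    apply continuity_pt_filterlim. apply (ex_derive_continuous f x).
    eexists. apply hd. lra.
  - rewrite Rmin_left in hc by lra. rewrite Rmax_right in hc by lra.
    assert (0 <= df c * (b - a)) by (apply Rmult_le_pos; [apply hpos; lra| lra]). lra.
Qed.

Lemma exp_le x y : x <= y -> exp x <= exp y.
Proof. intros h. destruct (Req_dec x y). subst; lra. left; apply exp_increasing; lra. Qed.

Lemma cosh_mono a b : 0 <= a <= b -> exp a + exp (-a) <= exp b + exp (-b).
Proof.
  intros h.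
  assert (h1 : exp a <= exp b) by (apply exp_le; lra).
  assert (h2 : exp (-(a+b)) <= 1) by (rewrite <- exp_0; apply exp_le; lra).
  assert (e1 : exp b * exp (-(a+b)) = exp (-a)) by (rewrite <- exp_plus; f_equal; ring).
  assert (e2 : exp a * exp (-(a+b)) = exp (-b)) by (rewrite <- exp_plus; f_equal; ring).
  assert (0 <= (exp b - exp a) * (1 - exp (-(a+b)))) by (apply Rmult_le_pos; lra).
  assert (E : (exp b - exp a) * (1 - exp (-(a+b))) = exp b - exp a - exp b * exp (-(a+b)) + exp a * exp (-(a+b))) by ring.
  rewrite E, e1, e2 in H. lra.
Qed.

Lemma sinh_ineq p z : 0 < p <= 1 -> 0 <= z ->
  exp (p*z) - exp (-(p*z)) <= p * (exp z - exp (-z)).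
Proof.
  intros hp hz.
  set (k := fun z => p * (exp z - exp (-z)) - (exp (p*z) - exp (-(p*z)))).
  assert (k 0 <= k z).
  { apply (incr_of_deriv k (fun z => p * (exp z + exp (-z)) - p*(exp (p*z) + exp (-(p*z))))).
    - lra.
    - intros x _. unfold k. auto_derive; auto. ring.
    - intros x hx. assert (exp (p*x) + exp (-(p*x)) <= exp x + exp (-x)).
      { apply cosh_mono. split; nra. }
      nra. }
  unfold k in H. rewrite Rmult_0_r, Ropp_0, exp_0 in H. lra.
Qed.

Definition hh p s := / (exp (p*s) - 1) - / (p * (exp s - 1)).

Lemma exp_gt1 x : 0 < x -> 1 < exp x.
Proof. intros; rewrite <- exp_0; apply exp_increasing; lra. Qed.

Lemma key p s1 s2 : 0 < p <= 1 -> 0 < s1 <= s2 -> hh p s2 <= hh p s1.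
Proof.
  intros hp hs.
  assert (H : (fun s => - hh p s) s1 <= (fun s => - hh p s) s2).
  2:{ simpl in H; lra. }
  apply (incr_of_deriv (fun s => - hh p s) (fun x => p * exp (p*x) / (exp (p*x) - 1)^2 - exp x / (p * (exp x - 1)^2))).
  - lra.
  - intros x hx. unfold hh.
    assert (1 < exp (p*x)) by (apply exp_gt1; nra).
    assert (1 < exp x) by (apply exp_gt1; lra).
    auto_derive.
    + repeat split; try lra; apply Rmult_integral_contrapositive_currified; lra.
    + field. repeat split; lra.
  - intros x hx.
    assert (hpx : 0 < p*x) by nra.
    set (a := exp (p*x/2)). set (b := exp (x/2)).
    assert (ea : exp (p*x) = a*a) by (unfold a; rewrite <- exp_plus; f_equal; field).
    assert (eb : exp x = b*b) by (unfold b; rewrite <- exp_plus; f_equal; field).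
    assert (ha : 1 < a) by (apply exp_gt1; lra).
    assert (hb : 1 < b) by (apply exp_gt1; lra).
    pose proof (sinh_ineq p (x/2) hp ltac:(lra)) as S.
    replace (p * (x/2)) with (p*x/2) in S by field.
    fold a in S. fold b in S. rewrite !exp_Ropp in S. fold a b in S.
    assert (S2 : b*(a*a-1) <= p*a*(b*b-1)).
    { assert (e1 : b*(a*a-1) = a*b*(a - /a)) by (field; lra).
      assert (e2 : p*a*(b*b-1) = a*b*(p*(b - /b))) by (field; lra).
      rewrite e1, e2. apply Rmult_le_compat_l; nra. }
    assert (S3 : (b*(a*a-1))^2 <= (p*a*(b*b-1))^2).
    { apply pow_incr. split; [apply Rmult_le_pos; nra | exact S2]. }
    rewrite ea, eb.
    assert (E : p * (a*a) / (a*a - 1)^2 - b*b / (p * (b*b - 1)^2) =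
       ((p*a*(b*b-1))^2 - (b*(a*a-1))^2) / (p * (a*a-1)^2 * (b*b-1)^2)).
    { field. repeat split; nra. }
    rewrite E. apply Rmult_le_pos. lra.
    left; apply Rinv_0_lt_compat. apply Rmult_lt_0_compat; [apply Rmult_lt_0_compat|]; try lra; apply pow_lt; nra.
Qed.

Lemma bern p : 0 < p <= 1 -> exp (p * ln 2) <= 1 + p.
Proof.
  intros hp.
  set (g := fun u => 1 + p*u - exp (p * ln (1+u))).
  assert (g 0 <= g 1).
  { apply (incr_of_deriv g (fun u => p - p * / (1+u) * exp (p * ln (1+u)))).
    - lra.
    - intros x hx. unfold g. auto_derive. lra. field. lra.
    - intros x hx.
      assert (exp (p * ln (1+x)) <= 1 + x).
      { rewrite <- (exp_ln (1+x)) at 2 by lra. apply exp_le.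
        assert (0 <= ln (1+x)) by (rewrite <- ln_1; destruct (Req_dec x 0); [subst; replace (1+0) with 1 by ring; lra| left; apply ln_increasing; lra]).
        nra. }
      assert (/(1+x) * exp (p * ln (1+x)) <= 1).
      { apply (Rmult_le_reg_l (1+x)). lra. field_simplify; lra. }
      nra. }
  unfold g in H. replace (1+0) with 1 in H by ring. rewrite ln_1, Rmult_0_r, exp_0 in H.
  replace (1+1) with 2 in H by ring. lra.
Qed.

Lemma step p t : 0 < p <= 1 -> 1 <= t ->
  p / (p + 1) * (Rpower t p * Rpower (t + 1) p / (Rpower (t + 1) p - Rpower t p))
  + Rpower (t+1) p <=
  p / (p + 1) * (Rpower (t+1) p * Rpower (t + 1 + 1) p / (Rpower (t + 1 + 1) p - Rpower (t+1) p)).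
Proof.
  intros hp ht. unfold Rpower.
  set (A := exp (p * ln t)). set (B := exp (p * ln (t+1))). set (C := exp (p * ln (t+1+1))).
  assert (l1 : ln t < ln (t+1)) by (apply ln_increasing; lra).
  assert (l2 : ln (t+1) < ln (t+1+1)) by (apply ln_increasing; lra).
  assert (l3 : ln (t+1+1) + ln t <= ln (t+1) + ln (t+1)).
  { rewrite <- !ln_mult by lra. left. apply ln_increasing. nra. nra. }
  assert (hA : 0 < A) by apply exp_pos.
  assert (hAB : A < B) by (apply exp_increasing; nra).
  assert (hBC : B < C) by (apply exp_increasing; nra).
  pose proof (key p (ln (t+1+1) - ln (t+1)) (ln (t+1) - ln t) hp ltac:(lra)) as K.
  unfold hh in K.
  assert (e1 : exp (p * (ln (t+1) - ln t)) = B / A).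
  { unfold A, B. replace (p * (ln (t+1) - ln t)) with (p * ln (t+1) + - (p * ln t)) by ring.
    rewrite exp_plus, exp_Ropp. reflexivity. }
  assert (e2 : exp (p * (ln (t+1+1) - ln (t+1))) = C / B).
  { unfold C, B. replace (p * (ln (t+1+1) - ln (t+1))) with (p * ln (t+1+1) + - (p * ln (t+1))) by ring.
    rewrite exp_plus, exp_Ropp. reflexivity. }
  assert (e3 : exp (ln (t+1) - ln t) = (t+1)/t).
  { rewrite <- ln_div by lra. apply exp_ln. apply Rdiv_lt_0_compat; lra. }
  assert (e4 : exp (ln (t+1+1) - ln (t+1)) = (t+1+1)/(t+1)).
  { rewrite <- ln_div by lra. apply exp_ln. apply Rdiv_lt_0_compat; lra. }
  rewrite e1, e2, e3, e4 in K.
  assert (f1 : / (B / A - 1) - / (p * ((t + 1) / t - 1)) = A/(B-A) - t/p) by (field; repeat split; lra).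
  assert (f2 : / (C / B - 1) - / (p * ((t + 1 + 1) / (t+1) - 1)) = B/(C-B) - (t+1)/p) by (field; repeat split; lra).
  rewrite f1, f2 in K.
  set (X := A/(B-A)) in *. set (Y := B/(C-B)) in *.
  assert (g1 : A * B / (B - A) = B * X) by (unfold X; field; lra).
  assert (g2 : B * C / (C - B) = B * (1 + Y)) by (unfold Y; field; lra).
  rewrite g1, g2.
  assert (hY : Y - X >= 1/p).
  { assert (t/p - (t+1)/p = - (1/p)) by (field; lra). lra. }
  assert (hc : p/(p+1) * (Y - X) >= 1/(p+1)).
  { replace (1/(p+1)) with (p/(p+1) * (1/p)) by (field; lra).
    apply Rle_ge, Rmult_le_compat_l. apply Rlt_le, Rdiv_lt_0_compat; lra. lra. }
  assert (p/(p+1) * (1 + Y) - p/(p+1)*X - 1 >= 0).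
  { assert (p/(p+1) + 1/(p+1) = 1) by (field; lra). nra. }
  assert (hB : 0 < B) by lra.
  assert (p / (p + 1) * (B * (1 + Y)) - (p / (p + 1) * (B * X) + B) = B * (p/(p+1) * (1 + Y) - p/(p+1)*X - 1)) by ring.
  nra.
Qed.

Theorem lemma4p4 (t : nat) (p : R) (ht : (1 <= t)%nat) (hp0 : 0 < p) (hp1 : p <= 1) :
  powsum p t <=
  p / (p + 1) *
  (Rpower (INR t) p * Rpower (INR t + 1) p / (Rpower (INR t + 1) p - Rpower (INR t) p)).
Proof.
  destruct t as [|k]; [lia|]. clear ht.
  induction k as [|k IH].
  - unfold powsum. simpl. unfold Rpower. rewrite ln_1, Rmult_0_r, exp_0.
    pose proof (bern p ltac:(lra)) as Hb.
    replace (1+1) with 2 by ring.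
    assert (hD : 1 < exp (p * ln 2)) by (apply exp_gt1; apply Rmult_lt_0_compat; [lra|]; rewrite <- ln_1; apply ln_increasing; lra).
    set (D := exp (p * ln 2)) in *.
    assert (E : p / (p+1) * (1 * D / (D - 1)) - 1 = (p + 1 - D) / ((p+1) * (D-1))) by (field; lra).
    assert (0 <= (p + 1 - D) / ((p+1) * (D-1))).
    { apply Rmult_le_pos. lra. left; apply Rinv_0_lt_compat; nra. }
    lra.
  - unfold powsum in *. simpl Nat.pred in *. cbn [sum_f_R0].
    assert (hk : 1 <= INR (S k)) by (apply (le_INR 1); lia).
    pose proof (step p (INR (S k)) ltac:(lra) hk) as St.
    rewrite <- S_INR in St. rewrite <- S_INR in St.
    assert (sum_f_R0 (fun k0 : nat => Rpower (INR (S k0)) p) k + Rpower (INR (S (S k))) p <= p / (p + 1) *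
      (Rpower (INR (S k)) p * Rpower (INR (S k) + 1) p /
       (Rpower (INR (S k) + 1) p - Rpower (INR (S k)) p)) + Rpower (INR (S (S k))) p) by lra.
    rewrite <- S_INR in H. rewrite <- (S_INR (S (S k))). lra.
Qed.
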